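(* There exist $U<0$ and constants $0<c\le C$ such that the following holds for every $u_0<U$, every $s\in[0,1]$, and every smooth function $\phi$ on $\overline{\Omega_{u_0}}$ (up to $\mathscr I^+$): $$c\,I_s(\phi)\le\mathcal E_{\mathcal H_{s,u_0}}(\phi)\le C\,I_s(\phi),$$ where $$I_s(\phi)=\int_{]-\infty,u_0[\times S^2}\Big(u^2(\partial_u\phi)^2+\frac{R}{|u|}(\partial_R\phi)^2+|\nabla_{S^2}\phi|^2\Big)\,du\,d^2\omega,$$ the integrand being evaluated on $\mathcal H_{s,u_0}$. For $s=0$ the two quantities coincide, i.e. $\mathcal E_{\mathscr I^+_{u_0}}(\phi)=\int_{]-\infty,u_0[\times S^2}\big(u^2(\partial_u\phi)^2+|\nabla_{S^2}\phi|^2\big)\,du\,d^2\omega$.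
   Context: Fix $M>0$. On the extreme Reissner–Nordström exterior, use the outgoing chart $(u,R,\omega)$, where: - $R=1/r$, $u=t-r_*$, $r_*=r-M+2M\log\frac{r-M}{M}-\frac{M^2}{r-M}$; - the rescaled metric is $\hat g=R^2(1-MR)^2du^2-2\,du\,dR-d\omega^2$, extending to $\mathscr I^+=\{R=0\}$; - $\partial_t$ is future-directed; - $d^2\omega$ denotes the area form of the unit sphere, $\nabla_{S^2}$ its gradient. Regions, for $u_0<0$: - $\Omega_{u_0}=\{t\ge0\}\cap\{u<u_0\}$; - for $0<s\le1$, $\mathcal H_{s,u_0}=\{u=-sr_*\}\cap\{u<u_0\}$, so that $\mathcal H_{1,u_0}=\{t=0\}\cap\{u<u_0\}$; - $\mathcal H_{0,u_0}=\mathscr I^+_{u_0}=\{R=0,\ u<u_0\}$. Each $\mathcal H_{s,u_0}$ is parametrised by $(u,\omega)\in]-\infty,u_0[\times S^2$. Energy flux. Let $T_{ab}(\phi)=\hat\nabla_a\phi\,\hat\nabla_b\phi-\frac12\hat g^{cd}\hat\nabla_c\phi\hat\nabla_d\phi\,\hat g_{ab}$. Let $K=u^2\partial_u-2(1+uR)\partial_R$ be the Morawetz vector field and $J_a(\phi)=K^bT_{ab}(\phi)$. For a spacelike or null hypersurface $\Sigma$, define $$\mathcal E_\Sigma(\phi)=\int_\Sigma J_a(\phi)\tilde n^a\,d\mu,$$ where: - $\tilde n$ is a future-directed normal to $\Sigma$; - $\tilde l$ is transverse to $\Sigma$ with $\hat g(\tilde l,\tilde n)=1$; - $d\mu$ is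 the positive measure induced on $\Sigma$ by $\tilde l\lrcorner(du\wedge dR\wedge d^2\omega)$. This definition is independent of the choice of $\tilde n$ and $\tilde l$. Explicitly, for $0<s\le1$, the integrand being evaluated on $\mathcal H_{s,u_0}$: $$\mathcal E_{\mathcal H_{s,u_0}}(\phi)=\int_{]-\infty,u_0[\times S^2}\Big(R^2(1-MR)^2u^2\,\partial_u\phi\,\partial_R\phi+u^2(\partial_u\phi)^2$$ $$+\frac{R^2(1-MR)^2}{2s}\big((Ru)^2(1-MR)^2+2(2-s)Ru+2(2-s)\big)(\partial_R\phi)^2$$ $$+\Big(Ru+\frac{(Ru)^2(1-MR)^2}{2s}+1\Big)|\nabla_{S^2}\phi|^2\Big)\,du\,d^2\omega.$$ *)

(* Defs.v *)
From HB Require Import structures.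
From mathcomp Require Import all_boot all_order all_algebra.
From mathcomp Require Import all_classical all_reals all_analysis.
Set Implicit Arguments. Unset Strict Implicit. Unset Printing Implicit Defensive.
Import Order.TTheory GRing.Theory Num.Theory.
Import numFieldNormedType.Exports.
Local Open Scope classical_set_scope.
Local Open Scope ring_scope.

Section ERN.
Variable R : realType.
Implicit Types (M u s r x a b c : R).

(* Tortoise coordinate of extreme Reissner-Nordstrom, r > M. *)
Definition rstar M r : R :=
  r - M + 2 * M * ln ((r - M) / M) - M ^+ 2 / (r - M).

(* Coordinates on (u,R,omega)-space: omega in S^2 is embedded in R^3, and a point
   is the row vector (u, R, x1, x2, x3) in 'rV_5. *)
Definition pt5 u x a b c : 'rV[R]_5 := \row_(i < 5) nth 0 [:: u; x; a; b; c] i.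
Definition e5 (i : 'I_5) : 'rV[R]_5 := delta_mx 0 i.

Definition dpart (i : nat) (f : 'rV[R]_5 -> R) (p : 'rV[R]_5) : R :=
  'D_(e5 (inord i)) f p.
Definition d_u f p := dpart 0 f p.
Definition d_R f p := dpart 1 f p.

(* |grad_{S^2} phi|^2 at a point whose sphere component (a,b,c) is a unit vector:
   squared norm of the tangential part of the R^3-gradient. *)
Definition gradS2sq (f : 'rV[R]_5 -> R) (p : 'rV[R]_5) : R :=
  let g2 := dpart 2 f p in let g3 := dpart 3 f p in let g4 := dpart 4 f p in
  g2 ^+ 2 + g3 ^+ 2 + g4 ^+ 2
  - (p ord0 (inord 2) * g2 + p ord0 (inord 3) * g3 + p ord0 (inord 4) * g4) ^+ 2.

Definition iterD (vs : seq 'rV[R]_5) (f : 'rV[R]_5 -> R) : 'rV[R]_5 -> R :=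
  foldr (fun (v : 'rV[R]_5) (g : 'rV[R]_5 -> R) (y : 'rV[R]_5) => derive g y v) f vs.
Definition smooth_on (W : set 'rV[R]_5) (f : 'rV[R]_5 -> R) : Prop :=
  forall (vs : seq 'rV[R]_5) (x : 'rV[R]_5), W x ->
    {for x, continuous (iterD vs f)} /\ (forall v, derivable (iterD vs f) x v).

(* closure of Omega_{u0} = {t >= 0} /\ {u < u0} in the (u,R) plane (times S^2),
   including scri^+ = {R = 0}. Exterior: r = 1/R > M. *)
Definition clOmega M (u0 : R) : set (R * R) :=
  [set p | p.1 <= u0 /\ 0 <= p.2 < M^-1 /\
           (p.2 = 0 \/ 0 <= p.1 + rstar M p.2^-1)].

Definition smooth_closure M (u0 : R) (phi : 'rV[R]_5 -> R) : Prop :=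
  exists W : set 'rV[R]_5, open W /\
    (forall u x a b c, clOmega M u0 (u, x) -> a ^+ 2 + b ^+ 2 + c ^+ 2 = 1 ->
       W (pt5 u x a b c)) /\
    smooth_on W phi.

(* The value of R on H_{s,u0} above the coordinate u:
   for 0 < s, the unique R in ]0, 1/M[ with u = - s r_*(1/R); for s = 0, R = 0 (scri). *)
Definition Rhyp M s u : R :=
  if s == 0 then 0
  else xget 0 [set x | 0 < x < M^-1 /\ u = - (s * rstar M x^-1)].

(* integral over ]-oo,u0[ x S^2 w.r.t. du d^2omega; S^2 is parametrised by
   spherical angles, d^2omega = sin th dth dph. *)
Definition int_uS2 (u0 : R) (F : R -> R -> R -> R -> R) : \bar R :=
  \int[lebesgue_measure]_(u in `]-oo, u0[%classic)
     \int[lebesgue_measure]_(th in `[0%R, pi%R]%classic)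
       \int[lebesgue_measure]_(ph in `[0%R, (2 * pi)%R]%classic)
         (F u (sin th * cos ph) (sin th * sin ph) (cos th) * sin th)%:E.

(* J_a(phi) n^a = T(K, n) for n tangent to the (u,R)-plane, in terms of
   pu = d_u phi, pR = d_R phi, gs = |grad_{S^2} phi|^2, at the point (u,R). *)
Definition gmet2 M x (X Y : R * R) : R :=
  x ^+ 2 * (1 - M * x) ^+ 2 * X.1 * Y.1 - X.1 * Y.2 - X.2 * Y.1.
Definition flux_density M u x (n : R * R) (pu pR gs : R) : R :=
  let K := (u ^+ 2, - 2 * (1 + u * x)) in
  let Kphi := K.1 * pu + K.2 * pR in
  let nphi := n.1 * pu + n.2 * pR in
  let dphi2 := - 2 * pu * pR - x ^+ 2 * (1 - M * x) ^+ 2 * pR ^+ 2 - gs in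
  Kphi * nphi - 2^-1 * gmet2 M x K n * dphi2.

(* For s = 0 (scri^+ = {R = 0}, a null hypersurface): J_a n^a with the
   future-directed normal n = d/du (= d/dt there), transverse l = - d/dR
   (g(l,n) = 1), so that the induced measure is du d^2omega. *)
Definition Eflux M (u0 : R) s (phi : 'rV[R]_5 -> R) : \bar R :=
  if s == 0 then
    int_uS2 u0 (fun u a b c =>
      let p := pt5 u 0 a b c in
      flux_density M u 0 (1, 0) (d_u phi p) (d_R phi p) (gradS2sq phi p))
  else
    int_uS2 u0 (fun u a b c =>
      let x := Rhyp M s u in
      let p := pt5 u x a b c in
      let pu := d_u phi p in let pR := d_R phi p in let gs := gradS2sq phi p in
      x ^+ 2 * (1 - M * x) ^+ 2 * u ^+ 2 * pu * pR + u ^+ 2 * pu ^+ 2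
      + x ^+ 2 * (1 - M * x) ^+ 2 / (2 * s) *
          ((x * u) ^+ 2 * (1 - M * x) ^+ 2 + 2 * (2 - s) * (x * u) + 2 * (2 - s))
          * pR ^+ 2
      + (x * u + (x * u) ^+ 2 * (1 - M * x) ^+ 2 / (2 * s) + 1) * gs).

Definition Is M (u0 : R) s (phi : 'rV[R]_5 -> R) : \bar R :=
  int_uS2 u0 (fun u a b c =>
    let x := Rhyp M s u in
    let p := pt5 u x a b c in
    u ^+ 2 * (d_u phi p) ^+ 2 + x / `|u| * (d_R phi p) ^+ 2 + gradS2sq phi p).

End ERN.

(* Main.v *)
Require Import Defs.
From HB Require Import structures.
From mathcomp Require Import all_boot all_order all_algebra.
From mathcomp Require Import all_classical all_reals all_analysis.
From mathcomp Require Import ring lra.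
Import Order.TTheory GRing.Theory Num.Theory.
Import numFieldNormedType.Exports.
Local Open Scope ring_scope.
Import HBNNSimple.

Section P.
Variable R : realFieldType.

Lemma quad (al be ga a q : R) : 0 < al -> be ^+ 2 <= 4 * al * ga ->
  0 <= al * a ^+ 2 + be * a * q + ga * q ^+ 2.
Proof.
move=> a0 h.
have h2 : 0 <= (2 * al * a + be * q) ^+ 2 by apply: sqr_ge0.
have h3 : 0 <= (4 * al * ga - be ^+ 2) * q ^+ 2 by apply: mulr_ge0; [lra|apply: sqr_ge0].
have : 0 <= 4 * al * (al * a ^+ 2 + be * a * q + ga * q ^+ 2) by nra.
rewrite pmulr_rge0 //; lra.
Qed.

Definition Kf (s t w : R) := t^+2 * w^+2 + 2*(2-s)*(1-t).

Lemma P1 (s r w : R) : 0 < s <= 1 -> 99/100 <= r <= 101/100 -> 99/100 <= w <= 1 ->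
  w^+4 * (s*r)^+3 <= 4 * (1 - 1/100) * (w^+2 * Kf s (s*r) w * r / 2 - 1/100).
Proof.
move=> /andP[s0 s1] /andP[r0 r1] /andP[w0 w1].
set t := s * r.
have t0 : 0 <= t by rewrite /t; nra.
have t1 : t <= 101/100 by rewrite /t; nra.
have w2 : 98/100 <= w^+2 by nra.
have w21 : w^+2 <= 1 by nra.
have hK : 98/100 * t^+2 + 2*(2-s)*(1-t) <= Kf s t w by rewrite /Kf; nra.
have hA : t^+3 <= 192/100 * (98/100 * t^+2 + 2*(2-s)*(1-t)) - 4/100.
  have [tt|tt] := lerP t 1.
    have : 0 <= (2-s-1)*(1-t) by nra.
    nra.
  have : (2-s)*(1-t) >= 2*(1-t) by nra.
  nra.
have K0 : 0 <= Kf s t w by nra.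
have w4 : w^+4 * t^+3 <= t^+3.
  have : w^+4 <= 1 by rewrite (_ : w^+4 = w^+2 * w^+2); [nra | ring].
  have : 0 <= t^+3 by rewrite exprn_ge0.
  nra.
have hwr : 485/1000 <= w^+2 * r / 2 by nra.
have : 485/1000 * Kf s t w <= w^+2 * Kf s t w * r / 2.
  rewrite (_ : w^+2 * Kf s t w * r / 2 = (w^+2 * r / 2) * Kf s t w); last by ring.
  by apply: ler_wpM2r.
lra.
Qed.

Lemma P2 (s r w : R) : 0 < s <= 1 -> 99/100 <= r <= 101/100 -> 99/100 <= w <= 1 ->
  w^+4 * (s*r)^+3 <= 4 * (100 - 1) * (100 - w^+2 * Kf s (s*r) w * r / 2).
Proof.
move=> /andP[s0 s1] /andP[r0 r1] /andP[w0 w1].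
set t := s * r.
have t0 : 0 <= t by rewrite /t; nra.
have t1 : t <= 101/100 by rewrite /t; nra.
have w21 : w^+2 <= 1 by nra.
have w20 : 0 <= w^+2 by nra.
have hK : Kf s t w <= 6.
  rewrite /Kf.
  have : t^+2 * w^+2 <= 2 by nra.
  have : 2*(2-s)*(1-t) <= 4 by nra.
  lra.
have hwr : w^+2 * r / 2 <= 1 by nra.
have K0 : w^+2 * Kf s t w * r / 2 <= 6.
  rewrite (_ : w^+2 * Kf s t w * r / 2 = (w^+2 * r / 2) * Kf s t w); last by ring.
  have [Kn|Kp] := lerP (Kf s t w) 0.
    have : 0 <= w^+2 * r / 2 by nra.
    nra.
  nra.
have w4 : w^+4 * t^+3 <= 2.
  have : w^+4 <= 1 by rewrite (_ : w^+4 = w^+2 * w^+2); [nra | ring].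
  have : t^+3 <= 2 by rewrite (_ : t^+3 = t * t * t); [nra|ring].
  have : 0 <= t^+3 by rewrite exprn_ge0.
  have : 0 <= w^+4 by rewrite exprn_ge0 //; lra.
  nra.
lra.
Qed.

Lemma Pg (s r w : R) : 0 < s <= 1 -> 99/100 <= r <= 101/100 -> 99/100 <= w <= 1 ->
  1/100 <= 1 - s * r + s * r^+2 * w^+2 / 2 <= 100.
Proof.
move=> /andP[s0 s1] /andP[r0 r1] /andP[w0 w1].
have w2 : 98/100 <= w^+2 by nra.
have w21 : w^+2 <= 1 by nra.
have h : r - r^+2 * w^+2 / 2 <= 52/100 by nra.
have h2 : 0 <= r^+2 * w^+2 / 2 <= 1 by apply/andP; split; nra.
apply/andP; split; nra.
Qed.
Lemma pointwise (s r x w u pu pR gs : R) :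
  0 < s <= 1 -> 99/100 <= r <= 101/100 -> 99/100 <= w <= 1 -> 0 < x -> 0 <= gs ->
  u = -(s*r)/x ->
  let Ge := x ^+ 2 * w ^+ 2 * u ^+ 2 * pu * pR + u ^+ 2 * pu ^+ 2
      + x ^+ 2 * w ^+ 2 / (2 * s) *
          ((x * u) ^+ 2 * w ^+ 2 + 2 * (2 - s) * (x * u) + 2 * (2 - s))
          * pR ^+ 2
      + (x * u + (x * u) ^+ 2 * w ^+ 2 / (2 * s) + 1) * gs in
  let Fi := u ^+ 2 * pu ^+ 2 + x / `|u| * pR ^+ 2 + gs in
  1/100 * Fi <= Ge /\ Ge <= 100 * Fi.
Proof.
move=> hs hr hw x0 g0 hu Ge Fi.
have [s0 s1] := andP hs; have [r0 r1] := andP hr.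
have sr0 : 0 < s * r by apply: mulr_gt0 => //; lra.
have xn : x != 0 by rewrite gt_eqF.
have sn : s != 0 by rewrite gt_eqF.
have rn : r != 0 by rewrite gt_eqF //; lra.
have xu : x * u = - (s * r) by rewrite hu; field.
have au : `|u| = s * r / x.
  rewrite hu ltr0_norm; first by rewrite mulNr opprK.
  by rewrite mulNr oppr_lt0 divr_gt0.
set g := 1 - s * r + s * r^+2 * w^+2 / 2.
set K := Kf s (s*r) w.
have [gl gu] := andP (Pg _ _ _ hs hr hw).
have eGe : Ge = (s*r/x)^+2 * pu^+2 + (w^+2 * s^+2 * r^+2) * pu * pR
     + (x^+2 * w^+2 * K / (2 * s)) * pR^+2 + g * gs.
  rewrite /Ge xu /K /Kf /g hu; field; by apply/andP.
have eFi : Fi = (s*r/x)^+2 * pu^+2 + x^+2 / (s * r) * pR^+2 + gs.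
  rewrite /Fi au hu; field.
  by rewrite rn sn xn.
split.
- have q := quad (99/100 * (s*r/x)^+2) (w^+2 * s^+2 * r^+2)
     (x^+2 * w^+2 * K / (2 * s) - 1/100 * (x^+2 / (s * r))) pu pR.
  have hq : 0 <= 99/100 * (s*r/x)^+2 * pu^+2 + (w^+2 * s^+2 * r^+2) * pu * pR
     + (x^+2 * w^+2 * K / (2 * s) - 1/100 * (x^+2 / (s * r))) * pR^+2.
    apply: q.
      apply: mulr_gt0; first lra; by rewrite exprn_gt0 // divr_gt0.
    have id : 4 * (99 / 100 * (s * r / x) ^+ 2) *
       (x ^+ 2 * w ^+ 2 * K / (2 * s) - 1 / 100 * (x ^+ 2 / (s * r)))
       - (w ^+ 2 * s ^+ 2 * r ^+ 2) ^+ 2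
       = (s * r) * (4 * (1 - 1/100) * (w^+2 * K * r / 2 - 1/100) - w^+4 * (s*r)^+3).
      by field; apply/andP; split => //; apply/andP; split.
    have := P1 _ _ _ hs hr hw; rewrite -/K => hP.
    have : 0 <= (s * r) * (4 * (1 - 1/100) * (w^+2 * K * r / 2 - 1/100) - w^+4 * (s*r)^+3).
      apply: mulr_ge0; lra.
    lra.
  have : 0 <= (g - 1/100) * gs by apply: mulr_ge0 => //; rewrite /g; lra.
  rewrite eGe eFi; lra.
- have q := quad ((100 - 1) * (s*r/x)^+2) (- (w^+2 * s^+2 * r^+2))
     (100 * (x^+2 / (s * r)) - x^+2 * w^+2 * K / (2 * s)) pu pR.
  have hq : 0 <= (100 - 1) * (s*r/x)^+2 * pu^+2 + (- (w^+2 * s^+2 * r^+2)) * pu * pR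
     + (100 * (x^+2 / (s * r)) - x^+2 * w^+2 * K / (2 * s)) * pR^+2.
    apply: q.
      apply: mulr_gt0; first lra; by rewrite exprn_gt0 // divr_gt0.
    have id : 4 * ((100 - 1) * (s * r / x) ^+ 2) *
       (100 * (x ^+ 2 / (s * r)) - x ^+ 2 * w ^+ 2 * K / (2 * s))
       - (- (w ^+ 2 * s ^+ 2 * r ^+ 2)) ^+ 2
       = (s * r) * (4 * (100 - 1) * (100 - w^+2 * K * r / 2) - w^+4 * (s*r)^+3).
      by field; apply/andP; split => //; apply/andP; split.
    have := P2 _ _ _ hs hr hw; rewrite -/K => hP.
    have : 0 <= (s * r) * (4 * (100 - 1) * (100 - w^+2 * K * r / 2) - w^+4 * (s*r)^+3).
      apply: mulr_ge0; lra.
    lra.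
  have : 0 <= (100 - g) * gs by apply: mulr_ge0 => //; rewrite /g; lra.
  rewrite eGe eFi; lra.
Qed.
End P.

Lemma rho_bounds (R : realType) (M s x u : R) : 0 < M -> 0 < s <= 1 -> 0 < x < M^-1 ->
  u = -(s * rstar M x^-1) -> u < -((3 * 400 * 400) * M) ->
  (99/100 <= rstar M x^-1 * x <= 101/100) /\ (99/100 <= 1 - M * x <= 1).
Proof.
move=> M0 /andP[s0 s1] /andP[x0 xM] hu hU.
set r := x^-1.
have xr : x * r = 1 by rewrite /r mulfV // gt_eqF.
have rM : M < r.
  have MV : M * M^-1 = 1 by rewrite mulfV // gt_eqF.
  have : M * x < M * M^-1 by rewrite ltr_pM2l.
  rewrite MV => Mx1.
  nra.
set rs := rstar M r.
have rsu : s * rs = - u by rewrite hu opprK.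
have rs_big : (3 * 400 * 400) * M < rs by nra.
set z := (r - M) / M.
have z0 : 0 < z by rewrite /z divr_gt0 // subr_gt0.
have ez : M * z = r - M by rewrite /z mulrC divfK // gt_eqF.
have q0 : 0 <= M ^+ 2 / (r - M) by rewrite divr_ge0 // ?sqr_ge0 // subr_ge0 ltW.
have ers : rs = r - M + 2 * M * ln z - M ^+ 2 / (r - M) by [].
have lz := ln_sublinear z0.
have rs3 : rs < 3 * r by nra.
have rbig : (400 * 400) * M < r by nra.
have z1 : 1 <= z by nra.
have lz0 := ln_ge0 z1.
have qM : M ^+ 2 / (r - M) <= M.
  have rM0 : 0 < r - M by rewrite subr_gt0.
  rewrite ler_pdivrMr //; nra.
have rslo : r - 2 * M <= rs by nra.
have k0 : (0:R) < 400 by lra.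
have k0' : (400:R) != 0 by rewrite gt_eqF.
have lzk : ln z < 400 + z / 400.
  have z4 : 0 < z / 400 by rewrite divr_gt0.
  have ez4 : z = 400 * (z / 400) by rewrite mulrC divfK.
  have el : ln z = ln 400 + ln (z / 400).
    by rewrite {1}ez4 lnM // posrE.
  have h1 := ln_sublinear k0; have h2 := ln_sublinear z4.
  lra.
have rshi : rs <= r + 800 * M + r / 200.
  have h : 2 * M * ln z <= 2 * M * (400 + z / 400) by apply: ler_wpM2l; [lra | exact: ltW lzk].
  have e2 : 2 * M * (400 + z / 400) = 800 * M + (M * z) / 200 by field.
  rewrite e2 ez in h; lra.
split; apply/andP; split.
- nra.
- have : r / 200 * x = 1/200 by rewrite mulrAC [r * x]mulrC xr.
  nra.
- nra.
- nra.
Qed.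

Lemma le_int_scale d (T : measurableType d) (R : realType)
  (mu : {measure set T -> \bar R}) (D : set T) (f g : T -> \bar R) (c : R) :
  0 < c -> (forall x, D x -> (0 <= f x)%E) -> (forall x, D x -> (c%:E * f x <= g x)%E) ->
  (c%:E * \int[mu]_(x in D) f x <= \int[mu]_(x in D) g x)%E.
Proof.
move=> c0 f0 fg.
have g0 x : D x -> (0 <= g x)%E.
  move=> Dx; apply: le_trans (fg x Dx); apply: mule_ge0; [by rewrite lee_fin ltW|exact: f0].
rewrite !ge0_integralE //.
rewrite -lee_pdivlMl //.
apply: ge_ereal_sup => _ [h hf <-].
rewrite lee_pdivlMl // -sintegralrM.
apply: ereal_sup_ubound; exists (scale_nnsfun h (ltW c0)) => //= x.
have := hf x; rewrite /patch /=; case: ifPn => [/set_mem Dx|_] hx.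
  rewrite EFinM; apply: le_trans (fg x Dx).
  by rewrite lee_pmul2l.
rewrite lee_fin; apply: mulr_ge0_le0; [exact: ltW | by rewrite -lee_fin].
Qed.

Lemma sphere1 (R : realType) (th ph : R) :
  (sin th * cos ph) ^+ 2 + (sin th * sin ph) ^+ 2 + (cos th) ^+ 2 = 1.
Proof.
have h1 := cos2Dsin2 th; have h2 := cos2Dsin2 ph.
have -> : (sin th * cos ph) ^+ 2 + (sin th * sin ph) ^+ 2 + (cos th) ^+ 2 =
  sin th ^+ 2 * (cos ph ^+ 2 + sin ph ^+ 2) + cos th ^+ 2 by ring.
by rewrite h2 mulr1 addrC h1.
Qed.

Lemma int_uS2_le (R : realType) (u0 c : R) (F G : R -> R -> R -> R -> R) : 0 < c ->
  (forall u a b e, u < u0 -> a ^+ 2 + b ^+ 2 + e ^+ 2 = 1 ->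
     0 <= F u a b e /\ c * F u a b e <= G u a b e) ->
  (c%:E * int_uS2 u0 F <= int_uS2 u0 G)%E.
Proof.
move=> c0 H; rewrite /int_uS2.
have Hs u th ph : u < u0 -> 0 <= th <= pi ->
   0 <= F u (sin th * cos ph) (sin th * sin ph) (cos th) * sin th /\
   c * (F u (sin th * cos ph) (sin th * sin ph) (cos th) * sin th) <=
     G u (sin th * cos ph) (sin th * sin ph) (cos th) * sin th.
  move=> hu hth; have s0 := sin_ge0_pi hth.
  have [h1 h2] := H u _ _ _ hu (sphere1 _ th ph).
  split; first exact: mulr_ge0.
  by rewrite mulrA; apply: ler_wpM2r.
have thD (th : R) : `[0%R, pi%R]%classic th -> 0 <= th <= pi.
  by first [rewrite /= in_itv | rewrite /= inE /= in_itv | move=> /set_mem; rewrite in_itv].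
have uD (u : R) : `]-oo, u0[%classic u -> u < u0.
  by first [rewrite /= in_itv /= ?andbT | rewrite /= inE /= in_itv /= ?andbT | move=> /set_mem; rewrite in_itv /= ?andbT].
apply: le_int_scale => // u Du.
  apply: integral_ge0 => th Dth; apply: integral_ge0 => ph _.
  by rewrite lee_fin; case: (Hs u th ph (uD _ Du) (thD _ Dth)).
apply: le_int_scale => // th Dth.
  apply: integral_ge0 => ph _.
  by rewrite lee_fin; case: (Hs u th ph (uD _ Du) (thD _ Dth)).
apply: le_int_scale => // ph _.
  by rewrite lee_fin; case: (Hs u th ph (uD _ Du) (thD _ Dth)).
by rewrite -EFinM lee_fin; case: (Hs u th ph (uD _ Du) (thD _ Dth)).
Qed.

Lemma gs_ge0 (R : realType) (phi : 'rV[R]_5 -> R) u x a b e :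
  a ^+ 2 + b ^+ 2 + e ^+ 2 = 1 -> 0 <= gradS2sq phi (pt5 u x a b e).
Proof.
move=> h; rewrite /gradS2sq /pt5 !mxE !inordK //=.
set g2 := dpart 2 phi _; set g3 := dpart 3 phi _; set g4 := dpart 4 phi _.
have -> : g2 ^+ 2 + g3 ^+ 2 + g4 ^+ 2 - (a * g2 + b * g3 + e * g4) ^+ 2 =
  (a ^+ 2 + b ^+ 2 + e ^+ 2) * (g2 ^+ 2 + g3 ^+ 2 + g4 ^+ 2) - (a * g2 + b * g3 + e * g4) ^+ 2.
  by rewrite h mul1r.
have -> : (a ^+ 2 + b ^+ 2 + e ^+ 2) * (g2 ^+ 2 + g3 ^+ 2 + g4 ^+ 2) - (a * g2 + b * g3 + e * g4) ^+ 2
  = (a * g3 - b * g2) ^+ 2 + (a * g4 - e * g2) ^+ 2 + (b * g4 - e * g3) ^+ 2 by ring.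
by rewrite !addr_ge0 ?sqr_ge0.
Qed.

Lemma point_all (R : realType) (M s u0 u x pu pR gs : R) :
  0 < M -> 0 < s <= 1 -> u < u0 -> u0 < -((3 * 400 * 400) * M) -> 0 <= gs ->
  (x = 0 \/ (0 < x < M^-1 /\ u = -(s * rstar M x^-1))) ->
  let Fi := u ^+ 2 * pu ^+ 2 + x / `|u| * pR ^+ 2 + gs in
  let Ge := x ^+ 2 * (1 - M * x) ^+ 2 * u ^+ 2 * pu * pR + u ^+ 2 * pu ^+ 2
      + x ^+ 2 * (1 - M * x) ^+ 2 / (2 * s) *
          ((x * u) ^+ 2 * (1 - M * x) ^+ 2 + 2 * (2 - s) * (x * u) + 2 * (2 - s))
          * pR ^+ 2
      + (x * u + (x * u) ^+ 2 * (1 - M * x) ^+ 2 / (2 * s) + 1) * gs in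
  0 <= Fi /\ 1/100 * Fi <= Ge /\ Ge <= 100 * Fi.
Proof.
move=> M0 hs hu hu0 g0 [->|[hx hux]] Fi Ge.
  have eq : Ge = Fi.
    by rewrite /Ge /Fi !(expr0n, mul0r, mulr0, add0r, addr0) /= mul1r.
  have F0 : 0 <= Fi.
    rewrite /Fi mul0r mul0r addr0; apply: addr_ge0 => //.
    by apply: mulr_ge0; apply: sqr_ge0.
  rewrite eq; split => //; split; lra.
have hU : u < -((3 * 400 * 400) * M) by lra.
have [hr hw] := @rho_bounds R M s x u M0 hs hx hux hU.
have [x0 _] := andP hx.
have hu' : u = -(s * (rstar M x^-1 * x)) / x.
  by rewrite hux; field; rewrite gt_eqF.
have [h1 h2] := @pointwise R s (rstar M x^-1 * x) x (1 - M * x) u pu pR gs hs hr hw x0 g0 hu'.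
split => //; rewrite /Fi /Ge; lra.
Qed.

Theorem proposition1 (R : realType) (M : R) (hM : 0 < M) :
  exists U c C : R, U < 0 /\ 0 < c /\ c <= C /\
    forall (u0 s : R) (phi : 'rV[R]_5 -> R),
      u0 < U -> 0 <= s <= 1 -> smooth_closure M u0 phi ->
      ((c%:E * Is M u0 s phi <= Eflux M u0 s phi)%E /\
       (Eflux M u0 s phi <= C%:E * Is M u0 s phi)%E /\
       (s = 0 ->
          Eflux M u0 s phi = Is M u0 s phi /\
          Eflux M u0 s phi =
            int_uS2 u0 (fun u a b c =>
              let p := pt5 u 0 a b c in
              u ^+ 2 * (d_u phi p) ^+ 2 + gradS2sq phi p))).
Proof.
exists (-((3 * 400 * 400) * M)), (1/100), 100.
split; first lra. split; first lra. split; first lra.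
move=> u0 s phi hu0 hs _.
have [s0|sn0] := eqVneq s 0.
  subst s.
  have EI : Eflux M u0 0 phi = Is M u0 0 phi.
    rewrite /Eflux /Is eqxx; congr int_uS2.
    apply/funext => u; apply/funext => a; apply/funext => b; apply/funext => e.
    rewrite /Rhyp eqxx /flux_density /gmet2 /= !(expr0n, mul0r, mulr0, add0r, addr0, mul1r, mulr1, subr0, sub0r) /=.
    set A := d_u phi (pt5 u 0 a b e); set B := d_R phi (pt5 u 0 a b e); set G := gradS2sq phi (pt5 u 0 a b e). by field.
  have E2 : Is M u0 0 phi = int_uS2 u0 (fun u a b c =>
              let p := pt5 u 0 a b c in
              u ^+ 2 * (d_u phi p) ^+ 2 + gradS2sq phi p).
    rewrite /Is; congr int_uS2.
    apply/funext => u; apply/funext => a; apply/funext => b; apply/funext => e.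
    by rewrite /Rhyp eqxx /= !(mul0r, addr0).
  have F0 u a b e : a ^+ 2 + b ^+ 2 + e ^+ 2 = 1 ->
    0 <= u ^+ 2 * (d_u phi (pt5 u 0 a b e)) ^+ 2 + gradS2sq phi (pt5 u 0 a b e).
    move=> h; apply: addr_ge0; last exact: gs_ge0.
    by apply: mulr_ge0; apply: sqr_ge0.
  rewrite EI E2.
  refine (conj _ (conj _ (fun _ => conj erefl erefl))); clear EI E2.
    apply: int_uS2_le; first lra.
    move=> u a b e _ h /=; have hF := F0 u a b e h; split; first exact: hF.
    lra.
  rewrite -lee_pdivrMl; last lra.
  apply: int_uS2_le; first by rewrite invr_gt0.
  move=> u a b e _ h /=; have hF := F0 u a b e h; split; first exact: hF.
  rewrite -[X in _ <= X]mul1r; apply: ler_wpM2r => //.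
  rewrite invf_le1; lra.
have [s00 s1] := andP hs.
have hs' : 0 < s <= 1 by rewrite s1 andbT lt_neqAle eq_sym sn0 s00.
have K : forall u a b e, u < u0 -> a ^+ 2 + b ^+ 2 + e ^+ 2 = 1 ->
  let x := Rhyp M s u in let p := pt5 u x a b e in
  let pu := d_u phi p in let pR := d_R phi p in let gs := gradS2sq phi p in
  0 <= u ^+ 2 * pu ^+ 2 + x / `|u| * pR ^+ 2 + gs /\
  1/100 * (u ^+ 2 * pu ^+ 2 + x / `|u| * pR ^+ 2 + gs) <=
    x ^+ 2 * (1 - M * x) ^+ 2 * u ^+ 2 * pu * pR + u ^+ 2 * pu ^+ 2
      + x ^+ 2 * (1 - M * x) ^+ 2 / (2 * s) *
          ((x * u) ^+ 2 * (1 - M * x) ^+ 2 + 2 * (2 - s) * (x * u) + 2 * (2 - s))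
          * pR ^+ 2
      + (x * u + (x * u) ^+ 2 * (1 - M * x) ^+ 2 / (2 * s) + 1) * gs /\
    x ^+ 2 * (1 - M * x) ^+ 2 * u ^+ 2 * pu * pR + u ^+ 2 * pu ^+ 2
      + x ^+ 2 * (1 - M * x) ^+ 2 / (2 * s) *
          ((x * u) ^+ 2 * (1 - M * x) ^+ 2 + 2 * (2 - s) * (x * u) + 2 * (2 - s))
          * pR ^+ 2
      + (x * u + (x * u) ^+ 2 * (1 - M * x) ^+ 2 / (2 * s) + 1) * gs <=
    100 * (u ^+ 2 * pu ^+ 2 + x / `|u| * pR ^+ 2 + gs).
  move=> u a b e hu hsph x p pu pR gs.
  have g0 : 0 <= gs by exact: gs_ge0.
  have hx : x = 0 \/ (0 < x < M^-1 /\ u = -(s * rstar M x^-1)).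
    rewrite /x /Rhyp (negbTE sn0).
    case: xgetP => [y -> Py|_]; [by right|by left].
  exact: (@point_all R M s u0 u x pu pR gs hM hs' hu hu0 g0 hx).
rewrite /Eflux /Is (negbTE sn0).
split; last split; last by move=> h; move: sn0; rewrite h eqxx.
  apply: int_uS2_le; first lra.
  move=> u a b e hu h; have [h1 [h2 h3]] := K u a b e hu h; split => //.
rewrite -lee_pdivrMl; last lra.
apply: int_uS2_le; first by rewrite invr_gt0.
move=> u a b e hu h; have [h1 [h2 h3]] := K u a b e hu h; split; first lra.
lra.
Qed.
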